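(* Let $\mathfrak{h}=\mathfrak{b}\oplus\mathfrak{c}\oplus\mathfrak{r}\oplus\mathfrak{z}$ be an orthogonal direct sum with $\mathfrak{b}$ a subspace of $\mathfrak{a}$, $\mathfrak{c}$ a complex subspace of $\mathfrak{g}_\alpha$, $\mathfrak{r}$ a totally real subspace of $\mathfrak{g}_\alpha$, and $\mathfrak{z}$ a subspace of $\mathfrak{g}_{2\alpha}$ with $[\mathfrak{c},\mathfrak{c}]\subset\mathfrak{z}$. Let $H$ be the connected Lie subgroup of $AN$ with Lie algebra $\mathfrak{h}$. Then each orbit of $H$ on $\mathbb{C}H^n$ can be written as $H\cdot\operatorname{Exp}(X)(o)$ for some $X\in(\mathfrak{a}\oplus\mathfrak{n})\ominus\mathfrak{h}$.
   Context: $\mathbb{C}H^n$ is the complex hyperbolic space of constant holomorphic sectional curvature $-1$; $G=SU(1,n)$, $o\in\mathbb{C}H^n$ fixed with stabilizer $K$, Cartan decomposition $\mathfrak{g}=\mathfrak{k}\oplus\mathfrak{p}$, $\mathfrak{a}\subset\mathfrak{p}$ maximal abelian ($1$-dimensional), restricted roots $\pm\alpha,\pm2\alpha$ with $\alpha,2\alpha$ positive, root spaces $\mathfrak{g}_\lambda$, $\mathfrak{n}=\mathfrak{g}_\alpha\oplus\mathfrak{g}_{2\alpha}$, and $AN$ the connected subgroup with Lie algebra $\mathfrak{a}\oplus\mathfrak{n}$, which acts simply transitively on $\mathbb{C}H^n$. $\mathfrak{a}\oplus\mathfrak{n}$ carries an inner product and complex structure $J$ (with $J\mathfrak{g}_\alpha=\mathfrak{g}_\alpha$,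 $J\mathfrak{a}=\mathfrak{g}_{2\alpha}$) making $AN$ with its left-invariant metric holomorphically isometric to $\mathbb{C}H^n$. The bracket on $\mathfrak{g}_\alpha$ is $[U,V]=\langle JU,V\rangle Z$ with $Z\in\mathfrak{g}_{2\alpha}$. $\operatorname{Exp}$ is the Lie exponential of $AN$; $\ominus$ is orthogonal complement. A subspace $W$ is complex if $JW\subset W$, totally real if $JW\perp W$. *)

(* Defs.v *)
From HB Require Import structures.
From mathcomp Require Import all_boot all_order all_algebra.
From mathcomp Require Import all_classical all_reals all_analysis.
Set Implicit Arguments. Unset Strict Implicit. Unset Printing Implicit Defensive.
Import Order.TTheory GRing.Theory Num.Theory.
Local Open Scope ring_scope.

(* Concrete model of the solvable part AN of SU(1,n), m = n - 1.
   g_alpha = C^m, realized as pairs (x, y) of real row vectors (x + i y).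
   The Lie algebra a + n = R A + g_alpha + R Z is encoded as ((a, U), x)
   meaning a A + U + x Z. *)
Definition Vt (R : realType) (m : nat) := ('rV[R]_m * 'rV[R]_m)%type.
Definition Lie (R : realType) (m : nat) := ((R^o * Vt R m) * R^o)%type.

Definition aco (R : realType) (m : nat) (X : Lie R m) : R := X.1.1.
Definition vco (R : realType) (m : nat) (X : Lie R m) : Vt R m := X.1.2.
Definition zco (R : realType) (m : nat) (X : Lie R m) : R := X.2.

Definition dotr (R : realType) (m : nat) (u v : 'rV[R]_m) : R := \sum_(i < m) u 0 i * v 0 i.
Definition dotV (R : realType) (m : nat) (p q : Vt R m) : R := dotr p.1 q.1 + dotr p.2 q.2.
Definition JV (R : realType) (m : nat) (p : Vt R m) : Vt R m := (- p.2, p.1).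
Definition scaleV (R : realType) (m : nat) (s : R) (p : Vt R m) : Vt R m := (s *: p.1, s *: p.2).
Definition addV (R : realType) (m : nat) (p q : Vt R m) : Vt R m := (p.1 + q.1, p.2 + q.2).

Definition inner (R : realType) (m : nat) (X Y : Lie R m) : R :=
  aco X * aco Y + dotV (vco X) (vco Y) + zco X * zco Y.

Definition Jmap (R : realType) (m : nat) (X : Lie R m) : Lie R m :=
  ((- zco X : R^o, JV (vco X)), aco X : R^o).

(* [U, V] = <J U, V> Z on g_alpha *)
Definition omega (R : realType) (m : nat) (U W : Vt R m) : R := dotV (JV U) W.

Definition lieb (R : realType) (m : nat) (X Y : Lie R m) : Lie R m :=
  ((0 : R^o, addV (scaleV (aco X / 2) (vco Y)) (scaleV (- (aco Y / 2)) (vco X))),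
   (aco X * zco Y - aco Y * zco X + omega (vco X) (vco Y) : R^o)).

(* The group AN: (t, v, y) stands for Exp_N(v + y Z) Exp(t A). *)
Definition Grp (R : realType) (m : nat) := (R * (Vt R m * R))%type.

Definition gone (R : realType) (m : nat) : Grp R m := (0, ((0, 0), 0)).

Definition gmul (R : realType) (m : nat) (g g' : Grp R m) : Grp R m :=
  let: (t, (v, y)) := g in
  let: (t', (v', y')) := g' in
  (t + t',
   (addV v (scaleV (expR (t / 2)) v'),
    y + expR t * y' + omega v (scaleV (expR (t / 2)) v') / 2)).

Definition psi (R : realType) (a : R) : R :=
  if a == 0 then 1 else (expR a - 1) / a.

(* Lie exponential of AN (solution of the left-invariant ODE, written out):
   Exp(tA + U + xZ) = (t, psi(t/2) U, psi(t) x). *)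
Definition Exp (R : realType) (m : nat) (X : Lie R m) : Grp R m :=
  (aco X, (scaleV (psi (aco X / 2)) (vco X), psi (aco X) * zco X)).

(* connected Lie subgroup with Lie algebra h = subgroup generated by Exp(h) *)
Definition inH (R : realType) (m : nat) (h : {vspace Lie R m}) (g : Grp R m) : Prop :=
  exists s : seq (Lie R m),
    all (fun X => X \in h) s /\ g = foldr (@gmul R m) (gone R m) (map (@Exp R m) s).

(* Main.v *)
Require Import Defs.
From HB Require Import structures.
From mathcomp Require Import all_boot all_order all_algebra.
From mathcomp Require Import all_classical all_reals all_analysis.
From mathcomp Require Import ring lra.
Import Order.TTheory GRing.Theory Num.Theory.
Local Open Scope ring_scope.


Lemma dotrDl {R : realType} {m : nat} (u v w : 'rV[R]_m) : dotr (u + v) w = dotr u w + dotr v w.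
Proof. by rewrite /dotr -big_split; apply: eq_bigr => i _; rewrite mxE mulrDl. Qed.
Lemma dotrZl {R : realType} {m : nat} (k : R) (u w : 'rV[R]_m) : dotr (k *: u) w = k * dotr u w.
Proof. by rewrite /dotr mulr_sumr; apply: eq_bigr => i _; rewrite mxE mulrA. Qed.
Lemma dotrNl {R : realType} {m : nat} (u w : 'rV[R]_m) : dotr (- u) w = - dotr u w.
Proof. by rewrite /dotr -sumrN; apply: eq_bigr => i _; rewrite mxE mulNr. Qed.
Lemma dotrC {R : realType} {m : nat} (u w : 'rV[R]_m) : dotr u w = dotr w u.
Proof. by rewrite /dotr; apply: eq_bigr => i _; rewrite mulrC. Qed.
Lemma dotrDr {R : realType} {m : nat} (u v w : 'rV[R]_m) : dotr w (u + v) = dotr w u + dotr w v.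
Proof. by rewrite dotrC dotrDl !(dotrC w). Qed.
Lemma dotrZr {R : realType} {m : nat} (k : R) (u w : 'rV[R]_m) : dotr w (k *: u) = k * dotr w u.
Proof. by rewrite dotrC dotrZl (dotrC w). Qed.
Lemma dotrNr {R : realType} {m : nat} (u w : 'rV[R]_m) : dotr w (- u) = - dotr w u.
Proof. by rewrite dotrC dotrNl (dotrC w). Qed.
Lemma dotr0l {R : realType} {m : nat} (w : 'rV[R]_m) : dotr 0 w = 0.
Proof. by rewrite /dotr big1 // => i _; rewrite mxE mul0r. Qed.
Lemma dotr0r {R : realType} {m : nat} (w : 'rV[R]_m) : dotr w 0 = 0.
Proof. by rewrite dotrC dotr0l. Qed.
Lemma dotr_ge0 {R : realType} {m : nat} (w : 'rV[R]_m) : 0 <= dotr w w.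
Proof. by rewrite /dotr; apply: sumr_ge0 => i _; rewrite -expr2 sqr_ge0. Qed.
Lemma dotr_eq0 {R : realType} {m : nat} (w : 'rV[R]_m) : dotr w w = 0 -> w = 0.
Proof.
move=> h; apply/rowP => i; rewrite mxE.
have H := @psumr_eq0P R _ xpredT (fun i => w 0 i * w 0 i).
have /H {}H : forall i, xpredT i -> 0 <= w 0 i * w 0 i by move=> j _; rewrite -expr2 sqr_ge0.
have := H h i isT => /eqP.
by rewrite mulf_eq0 orbb => /eqP.
Qed.

Lemma addVE {R : realType} {m : nat} (p q : Vt R m) : addV p q = p + q. Proof. by []. Qed.
Lemma scaleVE {R : realType} {m : nat} (k : R) (p : Vt R m) : scaleV k p = k *: p. Proof. by []. Qed.
Lemma omegaE {R : realType} {m : nat} (U W : Vt R m) : omega U W = - dotr U.2 W.1 + dotr U.1 W.2.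
Proof. by rewrite /omega /dotV /JV /= dotrNl. Qed.
Lemma omegaDl {R : realType} {m : nat} (U U' W : Vt R m) : omega (U + U') W = omega U W + omega U' W.
Proof. rewrite !omegaE /= !dotrDl; ring. Qed.
Lemma omegaDr {R : realType} {m : nat} (U U' W : Vt R m) : omega W (U + U') = omega W U + omega W U'.
Proof. rewrite !omegaE /= !dotrDr; ring. Qed.
Lemma omegaZl {R : realType} {m : nat} (k : R) (U W : Vt R m) : omega (k *: U) W = k * omega U W.
Proof. rewrite !omegaE /= !dotrZl; ring. Qed.
Lemma omegaZr {R : realType} {m : nat} (k : R) (U W : Vt R m) : omega W (k *: U) = k * omega W U.
Proof. rewrite !omegaE /= !dotrZr; ring. Qed.
Lemma omega0l {R : realType} {m : nat} (W : Vt R m) : omega 0 W = 0.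
Proof. by rewrite omegaE /= !dotr0l oppr0 addr0. Qed.
Lemma omega0r {R : realType} {m : nat} (W : Vt R m) : omega W 0 = 0.
Proof. by rewrite omegaE /= !dotr0r oppr0 addr0. Qed.
Lemma omega_self {R : realType} {m : nat} (W : Vt R m) : omega W W = 0.
Proof. by rewrite omegaE dotrC addNr. Qed.

Lemma innerDl {R : realType} {m : nat} (X X' Y : Lie R m) : inner (X + X') Y = inner X Y + inner X' Y.
Proof. rewrite /inner /dotV /aco /vco /zco /= !dotrDl.
case: X X' Y => [[a v] x] [[a' v'] x'] [[b w] y] /=.
move: (a : R) (a' : R) (b : R) (x : R) (x' : R) (y : R) => {}a {}a' {}b {}x {}x' {}y.
ring.
Qed.
Lemma innerDr {R : realType} {m : nat} (X X' Y : Lie R m) : inner Y (X + X') = inner Y X + inner Y X'.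
Proof. rewrite /inner /dotV /aco /vco /zco /= !dotrDr.
case: X X' Y => [[a v] x] [[a' v'] x'] [[b w] y] /=.
move: (a : R) (a' : R) (b : R) (x : R) (x' : R) (y : R) => {}a {}a' {}b {}x {}x' {}y.
ring.
Qed.
Lemma regsE {R : realType} (k : R) (a : R^o) : k *: a = k * a. Proof. by []. Qed.
Lemma innerZl {R : realType} {m : nat} (k : R) (X Y : Lie R m) : inner (k *: X) Y = k * inner X Y.
Proof. rewrite /inner /dotV /aco /vco /zco /= !dotrZl !regsE.
case: X Y => [[a v] x] [[b w] y] /=.
move: (a : R) (b : R) (x : R) (y : R) => {}a {}b {}x {}y.
ring.
Qed.
Lemma innerZr {R : realType} {m : nat} (k : R) (X Y : Lie R m) : inner Y (k *: X) = k * inner Y X.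
Proof. rewrite /inner /dotV /aco /vco /zco /= !dotrZr !regsE.
case: X Y => [[a v] x] [[b w] y] /=.
move: (a : R) (b : R) (x : R) (y : R) => {}a {}b {}x {}y.
ring.
Qed.
Lemma innerNl {R : realType} {m : nat} (X Y : Lie R m) : inner (- X) Y = - inner X Y.
Proof. by rewrite -scaleN1r innerZl mulN1r. Qed.
Lemma innerBl {R : realType} {m : nat} (X X' Y : Lie R m) : inner (X - X') Y = inner X Y - inner X' Y.
Proof. by rewrite innerDl innerNl. Qed.
Lemma inner_eq0 {R : realType} {m : nat} (X : Lie R m) : inner X X = 0 -> X = 0.
Proof.
case: X => [[a [u1 u2]] x]; rewrite /inner /dotV /aco /vco /zco /= => h.
move: (a : R) (x : R) h => {}a {}x h.
have h1 := dotr_ge0 u1; have h2 := dotr_ge0 u2.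
have ha : a = 0 by nra.
have hx : x = 0 by nra.
have e1 : dotr u1 u1 = 0 by nra.
have e2 : dotr u2 u2 = 0 by nra.
by rewrite ha hx (dotr_eq0 _ e1) (dotr_eq0 _ e2).
Qed.
Lemma inner0r {R : realType} {m : nat} (Y : Lie R m) : inner Y 0 = 0.
Proof. by rewrite -(scale0r (0 : Lie R m)) innerZr mul0r. Qed.

Lemma proj_span {R : realType} {m : nat} (s : seq (Lie R m)) (x : Lie R m) :
  exists2 u, u \in span s & forall y, y \in span s -> inner (x - u) y = 0.
Proof.
elim: s x => [|e s IH] x.
  exists 0; first exact: mem0v.
  by move=> y; rewrite span_nil memv0 => /eqP ->; rewrite inner0r.
have [w Hw Hwo] := IH e; have [u' Hu' Hu'o] := IH x.
rewrite span_cons.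
have sS : (span s <= <[e]> + span s)%VS by exact: addvSr.
have sE : (<[e]> <= <[e]> + span s)%VS by exact: addvSl.
have [f0|fn0] := eqVneq (inner (e - w) (e - w)) 0.
  have ew : e = w by apply/eqP; rewrite -subr_eq0; apply/eqP/inner_eq0.
  exists u'; first exact: (subvP sS).
  move=> y /memv_addP [y1 /vlineP [k ->] [y2 Hy2 ->]].
  by apply: Hu'o; rewrite memvD // memvZ // ew.
set f := e - w.
set cc := inner (x - u') f / inner f f.
exists (u' + cc *: f).
  have He : e \in (<[e]> + span s)%VS by apply: (subvP sE); exact: memv_line.
  have Hw' : w \in (<[e]> + span s)%VS by exact: (subvP sS).
  have Hu2 : u' \in (<[e]> + span s)%VS by exact: (subvP sS).
  by rewrite memvD // memvZ // /f memvB.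
move=> y /memv_addP [y1 /vlineP [k ->] [y2 Hy2 ->]].
have -> : k *: e + y2 = k *: f + (k *: w + y2) by rewrite /f scalerBr addrA subrK.
have Hy' : k *: w + y2 \in span s by rewrite memvD // memvZ.
rewrite opprD addrA innerDr !(innerBl (x - u')) !innerZl !innerZr (Hu'o _ Hy') (Hwo _ Hy').
rewrite /cc; field.
by [].
Qed.

Lemma proj_ex {R : realType} {m : nat} (S : {vspace Lie R m}) (x : Lie R m) :
  exists2 u, u \in S & forall y, y \in S -> inner (x - u) y = 0.
Proof. by rewrite -(span_basis (vbasisP S)); exact: proj_span. Qed.

Lemma psi0 {R : realType} : psi (0 : R) = 1.
Proof. by rewrite /psi eqxx. Qed.

Lemma psi_neq0 {R : realType} (s : R) : psi s != 0.
Proof.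
rewrite /psi; have [_|sn0] := eqVneq s 0; first exact: oner_neq0.
rewrite mulf_neq0 ?invr_eq0 // subr_eq0; apply/eqP => e.
have : expR s = expR 0 by rewrite e expR0.
by move/expR_inj => s0; rewrite s0 eqxx in sn0.
Qed.

Lemma psiN {R : realType} (s : R) : psi (- s) = expR (- s) * psi s.
Proof.
rewrite /psi oppr_eq0; have [->|sn0] := eqVneq s 0; first by rewrite oppr0 expR0 mulr1.
rewrite expRN; have := expR_gt0 s; move: (expR s) => E E0.
by field; rewrite sn0 gt_eqF.
Qed.

Lemma expR_half {R : realType} (t : R) : expR t = expR (t / 2) * expR (t / 2).
Proof. by rewrite -expRD -splitr. Qed.

Lemma gmulA {R : realType} {m : nat} (g g' g'' : Grp R m) :
  gmul g (gmul g' g'') = gmul (gmul g g') g''.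
Proof.
case: g => t [v y]; case: g' => t' [v' y']; case: g'' => t'' [v'' y''].
rewrite /gmul !addVE !scaleVE; congr (_, (_, _)).
- by rewrite addrA.
- by rewrite mulrDl expRD scalerDr scalerA addrA.
rewrite !omegaZr !omegaDr !omegaDl !omegaZl !omegaZr mulrDl !expRD (expR_half t).
move: (omega v v') (omega v v'') (omega v' v'') (expR (t/2)) (expR (t'/2)) (expR t') => A B C E1 E2 E3.
ring.
Qed.

Lemma gmul1g {R : realType} {m : nat} (g : Grp R m) : gmul (gone R m) g = g.
Proof.
case: g => t [v y]; rewrite /gmul /gone /= !addVE !scaleVE.
have -> : ((0 : 'rV[R]_m), (0 : 'rV[R]_m)) = (0 : Vt R m) by [].
by rewrite omega0l !mul0r expR0 !add0r scale1r mul1r addr0.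
Qed.

Lemma gmulg1 {R : realType} {m : nat} (g : Grp R m) : gmul g (gone R m) = g.
Proof.
case: g => t [v y]; rewrite /gmul /gone /= !addVE !scaleVE.
have -> : ((0 : 'rV[R]_m), (0 : 'rV[R]_m)) = (0 : Vt R m) by [].
by rewrite scaler0 omega0r mul0r mulr0 !addr0.
Qed.

Lemma ExpN_inv {R : realType} {m : nat} (Y : Lie R m) : gmul (Exp (- Y)) (Exp Y) = gone R m.
Proof.
case: Y => [[a V] x].
rewrite /Exp /gmul /gone /aco /vco /zco /= !addVE !scaleVE.
move: (a : R) (x : R) => {}a {}x.
have -> : ((0 : 'rV[R]_m), (0 : 'rV[R]_m)) = (0 : Vt R m) by [].
rewrite !mulNr !psiN; congr (_, (_, _)).
- by rewrite addNr.
- by rewrite scalerN !scalerA addNr.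
rewrite -[- V]scaleN1r !omegaZl !omegaZr omega_self !mulr0 mul0r addr0.
ring.
Qed.

Lemma Exp_inv {R : realType} {m : nat} (Y : Lie R m) : gmul (Exp Y) (Exp (- Y)) = gone R m.
Proof. by rewrite -{1}(opprK Y) ExpN_inv. Qed.

Arguments gmul : simpl never.
Arguments Exp : simpl never.

Lemma fold_mul {R : realType} {m : nat} (s : seq (Lie R m)) (k : Grp R m) :
  foldr (@gmul R m) k (map (@Exp R m) s) = gmul (foldr (@gmul R m) (gone R m) (map (@Exp R m) s)) k.
Proof.
elim: s => [|e s IH]; first by rewrite /= gmul1g.
by rewrite /= IH gmulA.
Qed.

Lemma inH_mul {R : realType} {m : nat} (h : {vspace Lie R m}) k k' :
  inH h k -> inH h k' -> inH h (gmul k k').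
Proof.
move=> [s [Hs ->]] [s' [Hs' ->]]; exists (s ++ s'); split.
  by rewrite all_cat Hs Hs'.
by rewrite map_cat foldr_cat [RHS]fold_mul.
Qed.

Lemma inH_Exp {R : realType} {m : nat} (h : {vspace Lie R m}) Y :
  Y \in h -> inH h (Exp Y).
Proof. by move=> HY; exists [:: Y]; rewrite /= gmulg1 HY. Qed.

Lemma inH_inv {R : realType} {m : nat} (h : {vspace Lie R m}) k :
  inH h k -> exists k', inH h k' /\ gmul k' k = gone R m.
Proof.
move=> [s [Hs ->]]; elim: s Hs => [|Y s IH].
  by move=> _; exists (gone R m); split; [exists [::] | rewrite /= gmul1g].
rewrite /=.
move=> /andP [HY Hs]; have [k'' [Hk'' E]] := IH Hs.
exists (gmul k'' (Exp (- Y))); split.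
  by apply: inH_mul => //; apply: inH_Exp; rewrite memvN.
by rewrite -gmulA (gmulA (Exp (- Y))) ExpN_inv gmul1g.
Qed.

Lemma dotVZl {R : realType} {m : nat} (k : R) (p q : Vt R m) : dotV (k *: p) q = k * dotV p q.
Proof. by rewrite /dotV /= !dotrZl mulrDr. Qed.
Lemma dotV0r {R : realType} {m : nat} (p : Vt R m) : dotV p (0, 0) = 0.
Proof. by rewrite /dotV /= !dotr0r addr0. Qed.

Lemma fst_gmul_Exp {R : realType} {m : nat} (Y : Lie R m) (g : Grp R m) :
  (gmul (Exp Y) g).1 = aco Y + g.1.
Proof. by case: g => t [v y]; rewrite /gmul /Exp. Qed.

Lemma gmul_Exp0 {R : realType} {m : nat} (Y : Lie R m) t v y :
  aco Y = 0 -> gmul (Exp Y) (t, (v, y)) = (t, (vco Y + v, zco Y + y + omega (vco Y) v / 2)).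
Proof.
move=> HY; rewrite /gmul /Exp HY /= !addVE !scaleVE mul0r psi0 expR0 !scale1r mul1r add0r.
by rewrite mul1r.
Qed.


Theorem lemma3p2 (R : realType) (n : nat) (hn : (0 < n)%N)
  (b c r z : {vspace Lie R n.-1}) :
  (forall X, X \in b -> vco X = (0, 0) /\ zco X = 0) ->
  (forall X, X \in c -> aco X = 0 /\ zco X = 0) ->
  (forall X, X \in c -> Jmap X \in c) ->
  (forall X, X \in r -> aco X = 0 /\ zco X = 0) ->
  (forall X Y, X \in r -> Y \in r -> inner (Jmap X) Y = 0) ->
  (forall X, X \in z -> aco X = 0 /\ vco X = (0, 0)) ->
  (forall X Y, X \in b -> Y \in c -> inner X Y = 0) ->
  (forall X Y, X \in b -> Y \in r -> inner X Y = 0) ->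
  (forall X Y, X \in b -> Y \in z -> inner X Y = 0) ->
  (forall X Y, X \in c -> Y \in r -> inner X Y = 0) ->
  (forall X Y, X \in c -> Y \in z -> inner X Y = 0) ->
  (forall X Y, X \in r -> Y \in z -> inner X Y = 0) ->
  (forall X Y, X \in c -> Y \in c -> lieb X Y \in z) ->
  let h := (b + c + r + z)%VS in
  forall g : Grp R n.-1,
  exists X : Lie R n.-1,
    (forall Y, Y \in h -> inner X Y = 0) /\
    (forall p : Grp R n.-1,
       (exists k, inH h k /\ p = gmul k g) <->
       (exists k, inH h k /\ p = gmul k (Exp X))).
Proof.
move=> Hb Hc HcJ Hr HrJ Hz Obc Obr Obz Ocr Ocz Orz Hcc h g.
set S := (c + r)%VS.
have HS : forall Y, Y \in S -> aco Y = 0 /\ zco Y = 0.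
  move=> Y /memv_addP [Y1 H1 [Y2 H2 ->]].
  have [a1 z1] := Hc _ H1; have [a2 z2] := Hr _ H2.
  by move: a1 z1 a2 z2; rewrite /aco /zco /= => -> -> -> ->; rewrite addr0.
have hE : h = (b + S + z)%VS by rewrite /h /S addvA.
have hb : (b <= h)%VS by rewrite hE -!addvA addvSl.
have hS : (S <= h)%VS.
  by rewrite hE; apply: subv_trans (addvSr b S) _; exact: addvSl.
have hz : (z <= h)%VS by rewrite hE addvSr.
have [Yb HYb HtB] : exists2 Yb, Yb \in b & forall Y, Y \in b -> (aco Yb + g.1) * aco Y = 0.
  case: (pselect (exists Y0, Y0 \in b /\ aco Y0 != 0)) => [[Y0 [HY0 a0]]|N].
    exists ((- g.1 / aco Y0) *: Y0); first by rewrite memvZ.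
    move=> Y _; have -> : aco ((- g.1 / aco Y0) *: Y0) = - g.1 / aco Y0 * aco Y0 by [].
    by rewrite divfK // addNr mul0r.
  exists 0; first exact: mem0v.
  move=> Y HY; have -> : aco Y = 0; last by rewrite mulr0.
  by apply/eqP; apply: contraT => hn0; case: N; exists Y.
case Eg1 : (gmul (Exp Yb) g) => [t1 [v1 y1]].
have Ht1 : t1 = aco Yb + g.1 by rewrite -[t1]/((t1, (v1, y1)).1) -Eg1 fst_gmul_Exp.
have [u Hu Huo] := proj_ex S (((0 : R^o), v1), (0 : R^o)).
have Hu' : - u \in S by rewrite memvN.
have [au zu] := HS _ Hu'.
case Eg2 : (gmul (Exp (- u)) (t1, (v1, y1))) => [t2 [v2 y2]].
have Eg2c := Eg2; move: Eg2c; rewrite gmul_Exp0 // => -[Et2 Ev2 Ey2].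
have HvS : forall Y, Y \in S -> dotV (vco (- u) + v1) (vco Y) = 0.
  move=> Y HY; have := Huo Y HY; have [a0 z0] := HS Y HY.
  rewrite /inner a0 z0 !mulr0 add0r addr0 => <-.
  by congr dotV; rewrite addrC.
have [Yz HYz HyZ] : exists2 Yz, Yz \in z & forall Y, Y \in z -> (zco Yz + y2) * zco Y = 0.
  case: (pselect (exists Y0, Y0 \in z /\ zco Y0 != 0)) => [[Y0 [HY0 a0]]|N].
    exists ((- y2 / zco Y0) *: Y0); first by rewrite memvZ.
    move=> Y _; have -> : zco ((- y2 / zco Y0) *: Y0) = - y2 / zco Y0 * zco Y0 by [].
    by rewrite divfK // addNr mul0r.
  exists 0; first exact: mem0v.
  move=> Y HY; have -> : zco Y = 0; last by rewrite mulr0.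
  by apply/eqP; apply: contraT => hn0; case: N; exists Y.
have [az vz] := Hz _ HYz.
case Eg3 : (gmul (Exp Yz) (t2, (v2, y2))) => [t3 [v3 y3]].
have Eg3c := Eg3; move: Eg3c; rewrite gmul_Exp0 // vz => -[Et3 Ev3 Ey3].
have Hv3 : v3 = v2 by rewrite -Ev3; apply: add0r.
have Hy3 : y3 = zco Yz + y2.
  by rewrite -Ey3; have -> : ((0 : 'rV[R]_n.-1), (0 : 'rV[R]_n.-1)) = 0 by []; rewrite omega0l mul0r addr0.
pose X : Lie R n.-1 := ((t3 : R^o, (psi (t3 / 2))^-1 *: v3), (y3 / psi t3 : R^o)).
have EX : Exp X = (t3, (v3, y3)).
  rewrite /Exp /X /aco /vco /zco /= scaleVE scalerA divff ?psi_neq0 // scale1r.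
  by rewrite mulrC divfK ?psi_neq0.
pose k1 := gmul (Exp Yz) (gmul (Exp (- u)) (Exp Yb)).
have Hk1 : inH h k1.
  by apply: inH_mul; [|apply: inH_mul]; apply: inH_Exp;
    [exact: (subvP hz) | exact: (subvP hS) | exact: (subvP hb)].
have EXk : Exp X = gmul k1 g by rewrite EX /k1 -!gmulA Eg1 Eg2 Eg3.
exists X; split.
  move=> Y; rewrite hE => /memv_addP [Y' /memv_addP [Y1 H1 [Y2 H2 ->]] [Y3 H3 ->]].
  rewrite !innerDr.
  have [vb zb] := Hb _ H1; have [a2 z2] := HS _ H2; have [a3 v3'] := Hz _ H3.
  rewrite /inner vb zb a2 z2 a3 v3' dotV0r /X /aco /vco /zco /= dotVZl.
  have e1 : t3 * Y1.1.1 = 0 by rewrite -Et3 -Et2 Ht1; exact: HtB.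
  have e2 : dotV v3 Y2.1.2 = 0 by rewrite Hv3 -Ev2; exact: HvS.
  have e3 : y3 * Y3.2 = 0 by rewrite Hy3; exact: HyZ.
  by rewrite e1 e2 (mulrAC y3 _ Y3.2) e3 !mul0r !mulr0 !addr0.
have [k1' [Hk1' Ek1]] := @inH_inv _ _ h k1 Hk1.
have Eg : g = gmul k1' (Exp X) by rewrite EXk gmulA Ek1 gmul1g.
move=> p; split => -[k [Hk ->]].
  by exists (gmul k k1'); split; [exact: inH_mul | rewrite {1}Eg gmulA].
by exists (gmul k k1); split; [exact: inH_mul | rewrite EXk gmulA].
Qed.
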